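(* Let $\mathcal{P}_s=\{(M,A,U)\in\mathbb{R}^3_+:\gamma M=A\}$, $\mathbb{M}_a=\{\gamma M>A\}$, $\mathbb{M}_s=\{\gamma M<A\}$ (subsets of $\mathbb{R}^3_+$). (i) If $\mathcal{N}_F>1$, then $\mathbf{E}_1^*\in\mathcal{P}_s$ iff $\mathcal{N}_M=\mathcal{N}_F$, $\mathbf{E}_1^*\in\mathbb{M}_a$ iff $\mathcal{N}_M>\mathcal{N}_F$, and $\mathbf{E}_1^*\in\mathbb{M}_s$ iff $\mathcal{N}_M<\mathcal{N}_F$. (ii) If $\mathcal{N}_M>1$ and $\theta_M>1$, then $\mathbf{E}_2^*\in\mathcal{P}_s$ iff $\mathcal{N}_M=\mathcal{N}_F$, $\mathbf{E}_2^*\in\mathbb{M}_s$ iff $\mathcal{N}_F>\mathcal{N}_M$, and $\mathbf{E}_2^*\in\mathbb{M}_a$ iff $\mathcal{N}_M>\mathcal{N}_F$. (iii) If $\mathcal{N}_M=\mathcal{N}_F>1$, then $\mathbf{E}_1^*=\mathbf{E}_2^*\in\mathcal{P}_s$. Consequently $\mathbf{E}_1^*$ is a regular equilibrium of the piecewise smooth natural system when $\mathcal{N}_M>\mathcal{N}_F>1$, and $\mathbf{E}_2^*$ is a regular equilibrium when $\mathcal{N}_F>\mathcal{N}_M>1$ (with $\theta_M>1$).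
   Context: Parameters: $r\in(0,1)$, $\rho,\sigma,\mu,\delta,\nu,\eta>0$, $\gamma\ge1$. $\mathcal{N}_M:=\frac{\gamma r\rho\nu}{\mu(\delta+\eta)}$, $\mathcal{N}_F:=\frac{(1-r)\rho\nu}{\delta(\delta+\eta+\nu)}$, $\theta_M:=\frac{(1-r)\mu(\delta+\eta)}{\gamma r\delta\nu}$, $\vartheta:=(1-r)\mu+r\delta$. $\mathbf{E}_1^*=(M_1^*,A_1^*,U_1^* )$ with $M_1^*=r\frac{\delta}{\vartheta}\frac{1}{\sigma}\ln\mathcal{N}_F$, $A_1^*=(1-r)\frac{\mu}{\vartheta}\frac{\delta+\eta}{\delta+\eta+\nu}\frac1\sigma\ln\mathcal{N}_F$, $U_1^*=(1-r)\frac{\mu}{\vartheta}\frac{\nu}{\delta+\eta+\nu}\frac1\sigma\ln\mathcal{N}_F$. $\mathbf{E}_2^*=(M_2^*,A_2^*,U_2^* )$ with $M_2^*=\frac{\delta+\eta}{\gamma\nu\theta_M+\eta+\delta}\frac1\sigma\ln\mathcal{N}_M$, $A_2^*=\frac{\gamma\nu(\theta_M-1)}{\gamma\nu\theta_M+\eta+\delta}\frac1\sigma\ln\mathcal{N}_M$, $U_2^*=\frac{\gamma\nu}{\gamma\nu\theta_M+\eta+\delta}\frac1\sigma\ln\mathcal{N}_M$. The natural piecewise smooth system uses the vector field $\Phi_1$ on $\mathbb{M}_a$ and $\Phi_2$ on $\mathbb{M}_s$, where $\Phi_1=\big(r\rho Ue^{-\sigma S}-\mu M,(1-r)\rho Ue^{-\sigma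 S}-\nu A+\eta U-\delta A,\nu A-(\eta+\delta)U\big)$ and $\Phi_2=\big(r\rho Ue^{-\sigma S}-\mu M,(1-r)\rho Ue^{-\sigma S}-\nu\gamma M+\eta U-\delta A,\nu\gamma M-(\eta+\delta)U\big)$, $S=M+A+U$; a regular equilibrium is a zero of $\Phi_1$ lying in $\mathbb{M}_a$ or of $\Phi_2$ lying in $\mathbb{M}_s$. *)

(* Defs.v *)
From Stdlib Require Import Reals.
Open Scope R_scope.

Record params := Params {
  p_r : R; p_rho : R; p_sigma : R; p_mu : R;
  p_delta : R; p_nu : R; p_eta : R; p_gamma : R }.

Definition admissible (p : params) : Prop :=
  0 < p_r p < 1 /\ 0 < p_rho p /\ 0 < p_sigma p /\ 0 < p_mu p /\
  0 < p_delta p /\ 0 < p_nu p /\ 0 < p_eta p /\ 1 <= p_gamma p.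

Section Quantities.
Variable p : params.
Let r := p_r p. Let rho := p_rho p. Let sigma := p_sigma p. Let mu := p_mu p.
Let delta := p_delta p. Let nu := p_nu p. Let eta := p_eta p. Let gamma := p_gamma p.

Definition N_M : R := gamma * r * rho * nu / (mu * (delta + eta)).
Definition N_F : R := (1 - r) * rho * nu / (delta * (delta + eta + nu)).
Definition theta_M : R := (1 - r) * mu * (delta + eta) / (gamma * r * delta * nu).
Definition vartheta : R := (1 - r) * mu + r * delta.

(* Points of R^3 are triples (M, A, U). *)
Definition E1_star : R * R * R :=
  ( r * (delta / vartheta) * (1 / sigma) * ln N_F,
    (1 - r) * (mu / vartheta) * ((delta + eta) / (delta + eta + nu)) * (1 / sigma) * ln N_F,
    (1 - r) * (mu / vartheta) * (nu / (delta + eta + nu)) * (1 / sigma) * ln N_F ).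

Definition E2_star : R * R * R :=
  ( (delta + eta) / (gamma * nu * theta_M + eta + delta) * (1 / sigma) * ln N_M,
    gamma * nu * (theta_M - 1) / (gamma * nu * theta_M + eta + delta) * (1 / sigma) * ln N_M,
    gamma * nu / (gamma * nu * theta_M + eta + delta) * (1 / sigma) * ln N_M ).

Definition Phi1 (x : R * R * R) : R * R * R :=
  let '(M, A, U) := x in
  let S := M + A + U in
  ( r * rho * U * exp (- sigma * S) - mu * M,
    (1 - r) * rho * U * exp (- sigma * S) - nu * A + eta * U - delta * A,
    nu * A - (eta + delta) * U ).

Definition Phi2 (x : R * R * R) : R * R * R :=
  let '(M, A, U) := x in
  let S := M + A + U in
  ( r * rho * U * exp (- sigma * S) - mu * M,
    (1 - r) * rho * U * exp (- sigma * S) - nu * gamma * M + eta * U - delta * A,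
    nu * gamma * M - (eta + delta) * U ).

Definition in_R3plus (x : R * R * R) : Prop :=
  let '(M, A, U) := x in 0 <= M /\ 0 <= A /\ 0 <= U.

Definition in_Ps (x : R * R * R) : Prop :=
  in_R3plus x /\ let '(M, A, _) := x in gamma * M = A.
Definition in_Ma (x : R * R * R) : Prop :=
  in_R3plus x /\ let '(M, A, _) := x in gamma * M > A.
Definition in_Ms (x : R * R * R) : Prop :=
  in_R3plus x /\ let '(M, A, _) := x in gamma * M < A.

Definition regular_equilibrium (x : R * R * R) : Prop :=
  (Phi1 x = (0, 0, 0) /\ in_Ma x) \/ (Phi2 x = (0, 0, 0) /\ in_Ms x).

End Quantities.

(* Main.v *)
Require Import Defs.
From Stdlib Require Import Reals Lra Psatz.
Open Scope R_scope.

Ltac pos := repeat first [lra | apply Rmult_lt_0_compat | apply Rinv_0_lt_compat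
   | apply Rplus_lt_0_compat | unfold Rdiv].

Lemma sgn3 K a b x y : a > 0 -> b > 0 -> x = K*a -> y = K*b ->
  (x=0<->y=0)/\(x>0<->y>0)/\(x<0<->y<0).
Proof.
intros Ha Hb -> ->. destruct (Rtotal_order K 0) as [H|[H|H]].
- assert (K*a<0) by nra. assert (K*b<0) by nra. lra.
- subst. rewrite !Rmult_0_l. lra.
- assert (K*a>0) by nra. assert (K*b>0) by nra. lra.
Qed.

Lemma region p x K a b : in_R3plus x -> a > 0 -> b > 0 ->
  (let '(M,A,_) := x in p_gamma p * M - A = K*a) -> N_M p - N_F p = K*b ->
  (in_Ps p x <-> N_M p = N_F p) /\ (in_Ma p x <-> N_M p > N_F p) /\
  (in_Ms p x <-> N_M p < N_F p).
Proof.
destruct x as [[M A] U]. intros H0 Ha Hb H1 H2.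
destruct (sgn3 _ _ _ _ _ Ha Hb H1 H2) as [S1 [S2 S3]].
unfold in_Ps, in_Ma, in_Ms. intuition lra.
Qed.

Lemma Ndiff p : admissible p ->
  N_M p - N_F p = (p_gamma p * p_r p * p_delta p * (p_delta p + p_eta p + p_nu p)
     - (1 - p_r p) * p_mu p * (p_delta p + p_eta p)) *
   (p_rho p * p_nu p / (p_mu p * (p_delta p + p_eta p) * p_delta p * (p_delta p + p_eta p + p_nu p)))
 /\ p_rho p * p_nu p / (p_mu p * (p_delta p + p_eta p) * p_delta p * (p_delta p + p_eta p + p_nu p)) > 0.
Proof.
destruct p as [r rho sigma mu delta nu eta gamma]; unfold admissible, N_M, N_F; simpl.
intros H. split. field. lra. unfold Rgt. pos.
Qed.

Lemma E1_R3 p : admissible p -> N_F p > 1 -> in_R3plus (E1_star p).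
Proof.
intros Hp HF. assert (HL: 0 < ln (N_F p)) by (rewrite <- ln_1; apply ln_increasing; lra).
revert Hp HF HL. destruct p as [r rho sigma mu delta nu eta gamma]; unfold admissible, in_R3plus, E1_star, N_F, vartheta; simpl.
intros H HF HL. split; [|split]; apply Rlt_le; pos.
Qed.

Lemma E2_R3 p : admissible p -> N_M p > 1 -> theta_M p > 1 -> in_R3plus (E2_star p).
Proof.
intros Hp HF Ht. assert (HL: 0 < ln (N_M p)) by (rewrite <- ln_1; apply ln_increasing; lra).
revert Hp HF HL Ht. destruct p as [r rho sigma mu delta nu eta gamma]; unfold admissible, in_R3plus, E2_star, N_M; simpl.
intros H HF HL Ht. split; [|split]; apply Rlt_le; pos.
Qed.
Lemma E1_diff p : admissible p -> N_F p > 1 ->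
  (let '(M,A,_) := E1_star p in p_gamma p * M - A =
   (p_gamma p * p_r p * p_delta p * (p_delta p + p_eta p + p_nu p)
     - (1 - p_r p) * p_mu p * (p_delta p + p_eta p)) *
   (ln (N_F p) / (p_sigma p * vartheta p * (p_delta p + p_eta p + p_nu p))))
  /\ ln (N_F p) / (p_sigma p * vartheta p * (p_delta p + p_eta p + p_nu p)) > 0.
Proof.
intros Hp HF. assert (HL: 0 < ln (N_F p)) by (rewrite <- ln_1; apply ln_increasing; lra).
revert Hp HF HL. destruct p as [r rho sigma mu delta nu eta gamma]; unfold admissible, E1_star, vartheta; simpl.
intros H HF HL. split.
- field. split; [|split]; apply Rgt_not_eq; unfold Rgt; pos.
- unfold Rgt; pos.
Qed.

Lemma E2_diff p : admissible p -> N_M p > 1 -> theta_M p > 1 ->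
  (let '(M,A,_) := E2_star p in p_gamma p * M - A =
   (p_gamma p * p_r p * p_delta p * (p_delta p + p_eta p + p_nu p)
     - (1 - p_r p) * p_mu p * (p_delta p + p_eta p)) *
   (ln (N_M p) / (p_sigma p * p_r p * p_delta p * (p_gamma p * p_nu p * theta_M p + p_eta p + p_delta p))))
  /\ ln (N_M p) / (p_sigma p * p_r p * p_delta p * (p_gamma p * p_nu p * theta_M p + p_eta p + p_delta p)) > 0.
Proof.
intros Hp HF Ht. assert (HL: 0 < ln (N_M p)) by (rewrite <- ln_1; apply ln_increasing; lra).
revert Hp HF HL Ht. destruct p as [r rho sigma mu delta nu eta gamma]; unfold admissible, E2_star, theta_M; simpl.
intros H HF HL Ht. split.
- field. repeat split; apply Rgt_not_eq; unfold Rgt; pos.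
- unfold Rgt; pos.
Qed.
Lemma E12 p : admissible p -> N_M p = N_F p -> E1_star p = E2_star p.
Proof.
intros Hp Heq. unfold E1_star, E2_star. rewrite Heq.
revert Hp Heq. destruct p as [r rho sigma mu delta nu eta gamma]; unfold admissible, N_M, N_F, theta_M, vartheta; simpl.
intros H Heq.
assert (HK : gamma * r * delta * (delta+eta+nu) - (1-r)*mu*(delta+eta) = 0).
{ assert (E: gamma * r * rho * nu / (mu * (delta + eta)) - (1 - r) * rho * nu / (delta * (delta + eta + nu)) = (gamma * r * delta * (delta+eta+nu) - (1-r)*mu*(delta+eta)) * (rho*nu / (mu*(delta+eta)*delta*(delta+eta+nu)))).
  { field. lra. }
  assert (P : rho*nu / (mu*(delta+eta)*delta*(delta+eta+nu)) > 0) by (unfold Rgt; pos).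
  rewrite Heq, Rminus_diag in E. symmetry in E. apply Rmult_integral in E. lra. }
assert (Hmu : mu = gamma * r * delta * (delta+eta+nu) / ((1-r)*(delta+eta))).
{ apply (Rmult_eq_reg_r ((1-r)*(delta+eta))). 2: apply Rgt_not_eq; unfold Rgt; pos.
  field_simplify. 2: split; apply Rgt_not_eq; unfold Rgt; pos. lra. }
clear Heq HK. subst mu. f_equal; [f_equal|]; field; repeat split; apply Rgt_not_eq; unfold Rgt; pos.
Qed.
Lemma Phi1_E1 p : admissible p -> N_F p > 1 -> Phi1 p (E1_star p) = (0,0,0).
Proof.
intros Hp HF. unfold Phi1, E1_star.
set (L := ln (N_F p)).
assert (HE : forall t, t = - L -> exp t = / N_F p).
{ intros t ->. rewrite exp_Ropp. unfold L. rewrite exp_ln; lra. }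
revert Hp HF HE. destruct p as [r rho sigma mu delta nu eta gamma]; unfold admissible, N_F, vartheta; simpl.
intros H HF HE. rewrite HE.
2:{ field. repeat split; apply Rgt_not_eq; unfold Rgt; pos. }
f_equal; [f_equal|]; field; repeat split; apply Rgt_not_eq; unfold Rgt; pos.
Qed.

Lemma Phi2_E2 p : admissible p -> N_M p > 1 -> theta_M p > 1 -> Phi2 p (E2_star p) = (0,0,0).
Proof.
intros Hp HF Ht. unfold Phi2, E2_star.
set (L := ln (N_M p)).
assert (HE : forall t, t = - L -> exp t = / N_M p).
{ intros t ->. rewrite exp_Ropp. unfold L. rewrite exp_ln; lra. }
revert Hp HF HE Ht. destruct p as [r rho sigma mu delta nu eta gamma]; unfold admissible, N_M, theta_M; simpl.
intros H HF HE Ht. rewrite HE.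
2:{ field. repeat split; apply Rgt_not_eq; unfold Rgt; pos. }
f_equal; [f_equal|]; field; repeat split; apply Rgt_not_eq; unfold Rgt; pos.
Qed.

Theorem mainTheorem6 (p : params) (Hp : admissible p) :
  (* (i) *)
  (N_F p > 1 ->
     (in_Ps p (E1_star p) <-> N_M p = N_F p) /\
     (in_Ma p (E1_star p) <-> N_M p > N_F p) /\
     (in_Ms p (E1_star p) <-> N_M p < N_F p)) /\
  (* (ii) *)
  (N_M p > 1 -> theta_M p > 1 ->
     (in_Ps p (E2_star p) <-> N_M p = N_F p) /\
     (in_Ms p (E2_star p) <-> N_F p > N_M p) /\
     (in_Ma p (E2_star p) <-> N_M p > N_F p)) /\
  (* (iii) *)
  (N_M p = N_F p -> N_F p > 1 -> E1_star p = E2_star p /\ in_Ps p (E1_star p)) /\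
  (* consequences *)
  (N_M p > N_F p -> N_F p > 1 -> regular_equilibrium p (E1_star p)) /\
  (N_F p > N_M p -> N_M p > 1 -> theta_M p > 1 -> regular_equilibrium p (E2_star p)).
Proof.
destruct (Ndiff p Hp) as [N1 Q1].
assert (I1 : N_F p > 1 ->
     (in_Ps p (E1_star p) <-> N_M p = N_F p) /\
     (in_Ma p (E1_star p) <-> N_M p > N_F p) /\
     (in_Ms p (E1_star p) <-> N_M p < N_F p)).
{ intro HF. destruct (E1_diff p Hp HF) as [D1 P1].
  exact (region p _ _ _ _ (E1_R3 p Hp HF) P1 Q1 D1 N1). }
assert (I2 : N_M p > 1 -> theta_M p > 1 ->
     (in_Ps p (E2_star p) <-> N_M p = N_F p) /\
     (in_Ms p (E2_star p) <-> N_F p > N_M p) /\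
     (in_Ma p (E2_star p) <-> N_M p > N_F p)).
{ intros HM Ht. destruct (E2_diff p Hp HM Ht) as [D1 P1].
  destruct (region p _ _ _ _ (E2_R3 p Hp HM Ht) P1 Q1 D1 N1) as [A [B C]].
  unfold Rgt in *. tauto. }
split; [exact I1|]. split; [exact I2|]. split.
{ intros Heq HF. split; [apply E12; auto|]. apply (proj1 (I1 HF)); auto. }
split.
{ intros H HF. left. split; [apply Phi1_E1; auto|]. apply (proj1 (proj2 (I1 HF))); auto. }
{ intros H HM Ht. right. split; [apply Phi2_E2; auto|]. apply (proj1 (proj2 (I2 HM Ht))); auto. }
Qed.
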